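(* For every $n\geq 3$, the cycle $C_n$ is a strong 2-cop-win graph and $\lim_{m\to\infty}\mathrm{capt}_2(C_n,m)=\lfloor (n-1)/2\rfloor$.
   Context: All graphs are finite, simple, connected and reflexive (a player may stay in place). The game of $k$ cops and $m$ robbers on $G$: in round 0 the cops first choose starting vertices, then the robbers choose theirs. In each round $i\geq 1$, all $k$ cops move (each to an adjacent vertex or staying), then all $m$ robbers move likewise. Several players may occupy the same vertex. Whenever a cop and some robbers occupy the same vertex, those robbers are captured and take no further part in the game. Both sides have full information. The cops win if all robbers are captured after finitely many rounds. $G$ is $k$-cop-win if $k$ cops can always win against one robber. For a $k$-cop-win graph $G$, $\mathrm{capt}_k(G,m)$ is the index of the round in which the last robber is captured when $k$ cops play to minimize this index and $m$ robbers play to maximize it. $G$ is strong $k$-cop-win if $\lim_{m\to\infty}\mathrm{capt}_k(G,m)$ exists (and is finite). *)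

(* Defs.v *)
From mathcomp Require Import all_boot.
Set Implicit Arguments. Unset Strict Implicit. Unset Printing Implicit Defensive.

(* A graph is given by a finite vertex type T and an adjacency relation e.
   Players may stay in place (reflexive moves). *)
Section Game.
Variables (T : finType) (e : rel T) (k m : nat).

Definition move (x y : T) : bool := (x == y) || e x y.

Notation cops := {ffun 'I_k -> T}.
(* positions of the m robbers; None = already captured *)
Notation robs := {ffun 'I_m -> option T}.

Definition capture (c : cops) (r : robs) : robs :=
  [ffun j => if r j is Some v then
               (if [exists i, c i == v] then None else Some v)
             else None].

Definition all_caught (r : robs) : bool := [forall j, r j == None].

Definition cop_step (c c' : cops) : bool := [forall i, move (c i) (c' i)].

Definition rob_step (r : robs) (r' : {ffun 'I_m -> T}) : bool :=
  [forall j, if r j is Some v then move v (r' j) else true].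

Definition relocate (r : robs) (r' : {ffun 'I_m -> T}) : robs :=
  [ffun j => if r j is Some _ then Some (r' j) else None].

(* cops_win t c r : from the position (c, r) reached at the end of a round,
   the cops can force that all robbers are captured within t further rounds.
   A round: the cops move (captures), then the robbers move (captures). *)
Fixpoint cops_win (t : nat) (c : cops) (r : robs) : bool :=
  match t with
  | 0 => all_caught r
  | t'.+1 =>
      all_caught r ||
      [exists c' : cops, cop_step c c' &&
         [forall r' : {ffun 'I_m -> T},
            rob_step (capture c' r) r' ==>
            cops_win t' c' (capture c' (relocate (capture c' r) r'))]]
  end.

(* capt_le t : k cops can guarantee that the last of m robbers is captured
   no later than round t (round 0 = cops place, then robbers place). *)
Definition capt_le (t : nat) : bool :=
  [exists c0 : cops, [forall r0 : {ffun 'I_m -> T},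
     cops_win t c0 (capture c0 [ffun j => Some (r0 j)])]].

Definition is_capt (t : nat) : Prop :=
  capt_le t /\ forall t', t' < t -> ~~ capt_le t'.

End Game.

Definition kcopwin (T : finType) (e : rel T) (k : nat) : Prop :=
  exists t, capt_le e k 1 t.

(* strong k-cop-win: lim_{m -> oo} capt_k(G,m) exists (and is finite);
   capt takes values in nat, so the limit exists iff the sequence is
   eventually constant. *)
Definition strong_kcopwin (T : finType) (e : rel T) (k : nat) : Prop :=
  kcopwin e k /\ exists L N, forall m, N <= m -> is_capt e k m L.

Definition capt_limit (T : finType) (e : rel T) (k L : nat) : Prop :=
  exists N, forall m, N <= m -> is_capt e k m L.

Definition cycle_adj (n : nat) : rel 'I_n :=
  fun i j => (val j == (val i).+1 %% n) || (val i == (val j).+1 %% n).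
Arguments cycle_adj : clear implicits.

(* Main.v *)
Require Import Defs.
From mathcomp Require Import all_boot.
From mathcomp Require Import zify.
Set Implicit Arguments. Unset Strict Implicit. Unset Printing Implicit Defensive.

Section Low.
Variables (T : finType) (e : rel T) (m : nat) (p : {ffun 'I_m -> T}).

Definition pos (r : {ffun 'I_m -> option T}) : {set T} :=
  [set w | [exists j, r j == Some w]].
Definition stay (r : {ffun 'I_m -> option T}) :=
  [forall j, (r j == None) || (r j == Some (p j))].

Lemma pos_capture (c : {ffun 'I_2 -> T}) r :
  pos (capture c r) = pos r :\: (c @: setT).
Proof.
apply/setP => w; rewrite !inE.
apply/existsP/andP.
- move=> [j]; rewrite ffunE; case E: (r j) => [v|] //.
  case: ifP => // Hc /eqP [<-]; split; last by apply/existsP; exists j; rewrite E.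
  apply/imsetP => -[i _ Hi]; move/negbT/negP: Hc; apply; apply/existsP; exists i; rewrite Hi.
  by [].
- move=> [Hn /existsP [j /eqP Hj]]; exists j; rewrite ffunE Hj.
  case: ifP => // /existsP [i /eqP Hi].
  by move/negP: Hn; case; apply/imsetP; exists i; rewrite ?inE.
Qed.

Lemma card_capture (c : {ffun 'I_2 -> T}) r : #|pos r| <= #|pos (capture c r)| + 2.
Proof.
rewrite pos_capture.
have H1 : #|c @: [set: 'I_2]| <= 2 by rewrite (leq_trans (leq_imset_card _ _)) // cardsT card_ord.
have H2 : pos r \subset (pos r :\: (c @: setT)) :|: (c @: setT).
  by apply/subsetP => x Hx; rewrite in_setU in_setD Hx andbT orNb.
apply: (leq_trans (subset_leq_card H2)).
by rewrite (leq_trans (leq_card_setU _ _)) // leq_add2l.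
Qed.

Lemma relocate_stay r : stay r -> relocate r p = r.
Proof.
move/forallP => H; apply/ffunP => j; rewrite ffunE.
by move: (H j); case: (r j) => //= v /eqP [->].
Qed.

Lemma capture_idem (c : {ffun 'I_2 -> T}) (r : {ffun 'I_m -> option T}) : capture c (capture c r) = capture c r.
Proof.
apply/ffunP => j; rewrite !ffunE.
case: (r j) => //= v; case: ifP => //= ->; by [].
Qed.

Lemma stay_capture (c : {ffun 'I_2 -> T}) r : stay r -> stay (capture c r).
Proof.
move/forallP => H; apply/forallP => j; rewrite ffunE.
move: (H j); case: (r j) => //= v; case: ifP => //.
Qed.

Lemma rob_step_stay r : stay r -> rob_step e r p.
Proof.
move/forallP => H; apply/forallP => j.
move: (H j); case: (r j) => //= v /eqP [->]; by rewrite /move eqxx.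
Qed.

Lemma pos_caught (r : {ffun 'I_m -> option T}) : all_caught r -> pos r = set0.
Proof.
move/forallP => H; apply/setP => w; rewrite inE in_set0.
apply/negbTE/negP => /existsP [j /eqP Hj]; by move: (H j); rewrite Hj.
Qed.

Lemma low t : forall (c : {ffun 'I_2 -> T}) r, stay r -> cops_win e t c r -> #|pos r| <= 2 * t.
Proof.
elim: t => [|t IH] c r Hs /=.
- by move/pos_caught ->; rewrite cards0.
- case/orP.
  + by move/pos_caught ->; rewrite cards0.
  + move/existsP => [c' /andP [_ /forallP /(_ p)]].
    have Hs' := stay_capture c' Hs.
    rewrite rob_step_stay //= relocate_stay // capture_idem => /IH -/(_ Hs') H.
    apply: (leq_trans (card_capture c' r)); lia.
Qed.
End Low.
Section Up.
Variables (n : nat) (hn : 2 < n).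
Let n0 : 0 < n. Proof. by apply: leq_trans hn. Qed.

Definition vx (k : nat) : 'I_n := Ordinal (ltn_pmod k n0).

Definition copsAt (s : nat) : {ffun 'I_2 -> 'I_n} :=
  [ffun i => if val i == 0 then vx (n - s) else vx s.+1].

Lemma copsAt_mem s (w : 'I_n) :
  [exists i, copsAt s i == w] = (val w == (n - s) %% n) || (val w == s.+1 %% n).
Proof.
apply/existsP/orP.
- move=> [i /eqP <-]; rewrite ffunE; case: ifP => _ /=; by [left|right].
- case=> /eqP H; [exists ord0 | exists (@Ordinal 2 1 isT)];
  by rewrite ffunE /= -val_eqE /= H.
Qed.

Lemma modS b : b < n -> b.+1 %% n = if b.+1 == n then 0 else b.+1.
Proof. move=> Hb; case: eqP => [->|H]; first by rewrite modnn. by rewrite modn_small //; lia. Qed.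

Definition Inv m s (r : {ffun 'I_m -> option 'I_n}) :=
  forall j w, r j = Some w -> s.+2 <= val w <= n - s.+1.

Lemma up m u : forall s (r : {ffun 'I_m -> option 'I_n}),
  Inv s r -> n <= 2 * (s + u) + 2 -> cops_win (cycle_adj n) u (copsAt s) r.
Proof.
elim: u => [|u IH] s r Hi Hu.
- apply/forallP => j; case E: (r j) => [w|] //; move: (Hi _ _ E); lia.
- case: (boolP (n <= 2 * s + 2)) => Hs.
  + apply/orP; left; apply/forallP => j; case E: (r j) => [w|] //; move: (Hi _ _ E); lia.
  apply/orP; right; apply/existsP; exists (copsAt s.+1); apply/andP; split.
  + apply/forallP => i; rewrite /move !ffunE; case: ifP => _; apply/orP; right;
      rewrite /cycle_adj /=.
    * rewrite (@modn_small (n - s.+1) n); last lia.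
      rewrite (_ : (n - s.+1).+1 = n - s); last lia.
      by rewrite eqxx orbT.
    * rewrite (@modn_small s.+1 n); last lia.
      by rewrite eqxx.
  + apply/forallP => r'; apply/implyP => Hst; apply: IH; last by lia.
    move=> j w; move: Hst => /forallP /(_ j); rewrite !ffunE.
    case E: (r j) => [v|] //=.
    move: (Hi _ _ E) => Hv.
    case: ifP => Hcv //=; case: ifP => Hcw //= Hmv [<-].
    rewrite !copsAt_mem in Hcv Hcw.
    move: Hcv Hcw Hmv; rewrite /move /cycle_adj -val_eqE.
    rewrite (modn_small (_ : n - s.+1 < n)); last lia.
    rewrite (modn_small (_ : s.+2 < n)); last lia.
    move=> Ha Hb; move/negbT: Ha => Ha; move/negbT: Hb => Hb.
    have Hv' : (val v).+1 < n by lia.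
    rewrite (modn_small Hv') (modS (ltn_ord (r' j))).
    have vE : forall x : 'I_n, val x = nat_of_ord x by [].
    rewrite !vE in Ha Hb Hv Hv' *.
    have vv : (v == r' j) = (nat_of_ord v == nat_of_ord (r' j)) by [].
    case: ((r' j).+1 =P n) => Hbn H; move: H Hbn Hb; set b := nat_of_ord (r' j) => H Hbn Hb; lia.
Qed.
End Up.

Lemma upper (n : nat) (hn : 2 < n) m : capt_le (cycle_adj n) 2 m ((n - 1) %/ 2).
Proof.
apply/existsP; exists (copsAt hn 0); apply/forallP => r0.
apply: up; last by rewrite add0n; lia.
move=> j w; rewrite !ffunE; case: ifP => // Hc [<-].
rewrite copsAt_mem subn0 modnn (@modn_small 1 n) in Hc; last lia.
move/negbT: Hc; case: (r0 j) => x Hx /=; lia.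
Qed.

Lemma lower (n : nat) (hn : 2 < n) m t : n <= m -> t < (n - 1) %/ 2 ->
  ~~ capt_le (cycle_adj n) 2 m t.
Proof.
move=> Hm Ht; apply/negP => /existsP [c0 /forallP H].
pose p : {ffun 'I_m -> 'I_n} := [ffun j => vx hn (val j)].
move: (H p) => Hw.
have Hs0 : stay p [ffun j => Some (p j)].
  by apply/forallP => j; rewrite ffunE eqxx orbT.
have := low (stay_capture c0 Hs0) Hw.
have := card_capture c0 [ffun j => Some (p j)].
have -> : pos [ffun j => Some (p j)] = [set: 'I_n].
  apply/setP => w; rewrite !inE; apply/existsP.
  have Hwm : val w < m by apply: leq_trans (ltn_ord w) Hm.
  exists (Ordinal Hwm); rewrite !ffunE; apply/eqP; congr Some; apply/val_inj => /=.
  by rewrite modn_small.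
rewrite cardsT card_ord; lia.
Qed.

Theorem mainTheorem11 (n : nat) (hn : 3 <= n) :
  strong_kcopwin (cycle_adj n) 2 /\ capt_limit (cycle_adj n) 2 ((n - 1) %/ 2).
Proof.
have hc : capt_limit (cycle_adj n) 2 ((n - 1) %/ 2).
  exists n => m Hm; split; first exact: upper.
  by move=> t' Ht; apply: lower.
split => //; split; first by exists ((n - 1) %/ 2); apply: upper.
by exists ((n - 1) %/ 2).
Qed.
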